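(* Assume $(TJ)$. Let $B$ be a ball of radius $r>0$, let $0<\rho\le r$, $\lambda\in\mathbb R$ and $\psi=\lambda\mathbf 1_B$. Then for every non-negative $f\in\mathcal F^{(\rho)}\cap L^\infty(M,\mu)$ and every $p\ge1$, $$\mathcal E^{(\rho)}(e^{-\psi}f,\,e^{\psi}f^{2p-1})\ge\frac1p\,\mathcal E^{(\rho)}(f^p),$$ where $\mathcal E^{(\rho)}(u)=\mathcal E^{(\rho)}(u,u)$.
   Context: $(M,d,\mu)$ is an ultra-metric measure space: $M$ is locally compact and separable, $d$ is an ultra-metric ($d(x,y)\le\max\{d(x,z),d(z,y)\}$), $\mu$ is a Radon measure with full support. Balls are $B(x,r)=\{y: d(x,y)\le r\}$. Let $j$ be a symmetric Radon measure on $(M\times M)\setminus\mathrm{diag}$ with $j(B,B^c)<\infty$ for every ball $B$; $\mathcal E(f,g)=\iint(f(x)-f(y))(g(x)-g(y))\,dj(x,y)$, $\mathcal F$ is the closure, in the norm $\sqrt{\mathcal E(u)+\|u\|_2^2}$, of finite linear combinations of indicators of disjoint compact balls. Fixed $\beta>0$, $R_0\in(0,\operatorname{diam}M]$. Condition $(TJ)$: there is a transition kernel $J(x,dy)$ with $dj(x,y)=J(x,dy)\,d\mu(x)$ and a constant $C$ with $J(x,B(x,r)^c)\le Cr^{-\beta}$ for all $x\in M$, $r\in(0,R_0)$. Truncated form: for $\rho>0$, $\mathcal E^{(\rho)}(u,v)=\int_M\int_{B(x,\rho)}(u(x)-u(y))(v(x)-v(y))\,J(x,dy)\,d\mu(x)$.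 Under $(TJ)$, its closure $(\mathcal E^{(\rho)},\mathcal F^{(\rho)})$ is a regular Dirichlet form on $L^2(M,\mu)$ given by the same formula, with $\mathcal F^{(\rho)}=\mathcal F$. *)

(* Defs.v *)
From HB Require Import structures.
From mathcomp Require Import all_boot all_order all_algebra.
From mathcomp Require Import all_classical all_reals all_analysis.
Set Implicit Arguments. Unset Strict Implicit. Unset Printing Implicit Defensive.
Import Order.TTheory GRing.Theory Num.Theory.
Local Open Scope classical_set_scope.
Local Open Scope ring_scope.

Section UltraMetricDefs.
Variables (R : realType) (dM : measure_display) (M : measurableType dM).
Variable (d : M -> M -> R).

Definition ultrametric : Prop :=
  (forall x y, 0 <= d x y) /\ (forall x y, d x y = 0 <-> x = y) /\
  (forall x y, d x y = d y x) /\
  (forall x y z, d x y <= Num.max (d x z) (d z y)).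

Definition dball (x : M) (r : R) : set M := [set y | d x y <= r].

Definition dopen (U : set M) : Prop :=
  forall x, U x -> exists r, 0 < r /\ dball x r `<=` U.

Definition dcompact (K : set M) : Prop :=
  forall (I : Type) (U : I -> set M), (forall i, dopen (U i)) ->
    K `<=` \bigcup_i U i ->
    exists F : set I, finite_set F /\ K `<=` \bigcup_(i in F) U i.

Definition dlocally_compact : Prop :=
  forall x, exists r, 0 < r /\ dcompact (dball x r).

Definition dseparable : Prop :=
  exists D : set M, countable D /\
    forall x e, 0 < e -> exists y, D y /\ d x y < e.

Definition ddiam : \bar R := ereal_sup (range (fun z : M * M => (d z.1 z.2)%:E)).

Definition borel_of_d : Prop := (@measurable _ M) = <<s dopen >>.

Local Open Scope ereal_scope.

(** Radon measure (M locally compact separable metric: = finite on compacts) *)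
Definition radon (mu : {measure set M -> \bar R}) : Prop :=
  forall K, measurable K -> dcompact K -> mu K < +oo.

Definition full_support (mu : {measure set M -> \bar R}) : Prop :=
  forall x (r : R), (0 < r)%R -> 0 < mu (dball x r).

Variables (mu : {measure set M -> \bar R}) (J : R.-ker M ~> M).

(** the jump measure dj(x,y) = J(x,dy) dmu(x) *)
Definition jmeas (A : set (M * M)) : \bar R :=
  \int[mu]_x J x [set y | A (x, y)].

Definition jsymmetric : Prop :=
  forall A : set (M * M), measurable A ->
    jmeas A = jmeas [set z | A (z.2, z.1)].

Definition joffdiag : Prop := jmeas [set z | z.1 = z.2] = 0.

(** j is Radon on (M x M) \ diag: finite on products of disjoint compacts *)
Definition jradon : Prop :=
  forall K1 K2 : set M, measurable K1 -> measurable K2 ->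
    dcompact K1 -> dcompact K2 -> K1 `&` K2 = set0 ->
    jmeas (K1 `*` K2) < +oo.

Definition jballs : Prop :=
  forall x (r : R), (0 < r)%R -> jmeas (dball x r `*` ~` dball x r) < +oo.

Definition TJ (beta R0 : R) : Prop :=
  exists C : R, forall x (r : R), (0 < r < R0)%R ->
    J x (~` dball x r) <= (C * r `^ (- beta))%:E.

Definition Eform (u : M -> R) : \bar R :=
  \int[mu]_x \int[J x]_y ((u x - u y) ^+ 2)%:E.

Definition Erho (rho : R) (u v : M -> R) : \bar R :=
  \int[mu]_x \int[J x]_(y in dball x rho) ((u x - u y) * (v x - v y))%:E.

Definition dstep (u : M -> R) : Prop :=
  exists (n : nat) (c : 'I_n -> R) (x0 : 'I_n -> M) (r : 'I_n -> R),
    (forall i, (0 < r i)%R /\ dcompact (dball (x0 i) (r i))) /\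
    (forall i j, i != j -> dball (x0 i) (r i) `&` dball (x0 j) (r j) = set0) /\
    u = (fun x => \sum_(i < n) c i * \1_(dball (x0 i) (r i)) x)%R.

Definition dirF (u : M -> R) : Prop :=
  measurable_fun setT u /\
  \int[mu]_x ((u x) ^+ 2)%:E < +oo /\
  exists un : nat -> M -> R, (forall n, dstep (un n)) /\
    (fun n => Eform (fun x => un n x - u x)%R +
              \int[mu]_x ((un n x - u x) ^+ 2)%:E) @ \oo --> 0.

Definition Linfty (u : M -> R) : Prop :=
  measurable_fun setT u /\ exists C : R, {ae mu, forall x, (`|u x| <= C)%R}.

End UltraMetricDefs.

(* Main.v *)
Require Import Defs.
From HB Require Import structures.
From mathcomp Require Import all_boot all_order all_algebra.
From mathcomp Require Import all_classical all_reals all_analysis.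
From mathcomp Require Import ring lra.
Import Order.TTheory GRing.Theory Num.Theory.
Local Open Scope classical_set_scope.
Local Open Scope ring_scope.

Lemma scale_le_integral d (T : measurableType d) (R : realType)
  (mu : {measure set T -> \bar R}) (D : set T) (c : R) (f g : T -> \bar R) :
  0 < c -> (forall x, D x -> (0 <= f x)%E) -> (forall x, D x -> (c%:E * f x <= g x)%E) ->
  (c%:E * \int[mu]_(x in D) f x <= \int[mu]_(x in D) g x)%E.
Proof.
move=> c0 f0 fg.
have g0 x : D x -> (0 <= g x)%E.
  move=> Dx; apply: le_trans (fg x Dx); apply: mule_ge0; [by rewrite lee_fin ltW|exact: f0].
rewrite (ge0_integralE mu f0) (ge0_integralE mu g0).
rewrite -lee_pdivlMl //; apply: ge_ereal_sup => _ [h /= hf <-].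
rewrite lee_pdivlMl // -sintegralrM; apply: ereal_sup_ubound => /=.
exists (scale_nnsfun h (ltW c0)) => //= x.
move: (hf x); rewrite /patch; case: ifPn => [/[!inE] Dx hfx|_ hx0].
  by rewrite EFinM; apply: le_trans (fg x Dx); rewrite lee_pmul2l ?lte_fin.
by rewrite lee_fin pmulr_rle0 // -lee_fin.
Qed.

Lemma bern (R : realType) (a b p : R) : 0 < a -> 0 <= b -> 1 <= p ->
  p * (a `^ (p - 1) * b) <= (p - 1) * a `^ p + b `^ p.
Proof.
move=> a0 b0 p1.
have [->|p1'] := eqVneq p 1.
  by rewrite subrr powRr0 !mul1r mul0r add0r (powRr1 b0).
have pg1 : 1 < p by rewrite lt_neqAle eq_sym p1' p1.
have p0 : 0 < p by apply: lt_trans pg1.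
have pm0 : 0 < p - 1 by rewrite subr_gt0.
pose q := p / (p - 1).
have q0 : 0 < q by rewrite divr_gt0.
have pq : p^-1 + q^-1 = 1.
  rewrite /q invf_div; field.
  by rewrite gt_eqF.
have := conjugate_powR (powR_ge0 a (p - 1)) b0 q0 p0 _.
rewrite addrC => /(_ pq).
rewrite -powRrM /q mulrCA divff ?gt_eqF // mulr1 => H.
move: H; set X := a `^ p; set Y := b `^ p; set Z := a `^ (p - 1) * b.

have -> : X / (p / (p - 1)) + Y / p = ((p - 1) * X + Y) / p.
  by field; rewrite !gt_eqF.
by rewrite ler_pdivlMr // mulrC.
Qed.

Lemma key_le (R : realType) (a b p : R) : 0 <= b -> b <= a -> 1 <= p ->
  (a `^ p - b `^ p) * (a `^ p - b `^ p)
  <= p * ((a - b) * (a `^ (2 * p - 1) - b `^ (2 * p - 1))).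
Proof.
move=> b0 ba p1.
have p0 : 0 < p by apply: lt_le_trans p1.
have q0 : 2 * p - 1 != 0 by rewrite gt_eqF // subr_gt0; lra.
have [a0|a0] := eqVneq a 0.
  have b00 : b = 0 by apply/eqP; rewrite eq_le b0 -a0 ba.
  rewrite a0 b00 powR0 ?gt_eqF // powR0 //. by rewrite subrr !mul0r mulr0.
have apos : 0 < a by rewrite lt_neqAle eq_sym a0 (le_trans b0 ba).
set P := a `^ (p - 1).
have P0 : 0 < P by apply: powR_gt0.
have E1 : a * P = a `^ p by rewrite mulr_powRB1 ?(ltW apos).
have Hb : p * (P * b) <= (p - 1) * a `^ p + b `^ p by exact: bern.
have E2 : a `^ (2 * p - 1) = P * a `^ p.
  have -> : 2 * p - 1 = (p - 1) + p by ring.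
  by rewrite powRD // a0 implybT.
have E3 : b `^ (2 * p - 1) = b `^ (p - 1) * b `^ p.
  have e : 2 * p - 1 = (p - 1) + p by ring.
  by rewrite e powRD // -e (negbTE q0).
have L1 : b `^ (p - 1) <= P.
  by apply: ge0_ler_powR => //; rewrite ?nnegrE ?subr_ge0 // (le_trans b0 ba).
have L2 : b `^ p <= a `^ p.
  by apply: ge0_ler_powR => //; rewrite ?nnegrE ?(ltW p0) // (le_trans b0 ba).
have Yge0 : 0 <= b `^ p := powR_ge0 _ _.
rewrite E2 E3.
move: Hb L1 L2 Yge0 P0 E1.
set X := a `^ p; set Y := b `^ p; set W := b `^ (p - 1).
move=> Hb L1 L2 Yge0 P0 E1.
have H1 : X - Y <= p * P * (a - b) by nra.
have H2 : P * (X - Y) <= P * X - W * Y by nra.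
have A0 : 0 <= X - Y by rewrite subr_ge0.
have C0 : 0 <= P * X - W * Y by apply: le_trans H2; rewrite mulr_ge0 // ltW.
have S1 : (X - Y) * (P * (X - Y)) <= (X - Y) * (P * X - W * Y) by rewrite ler_wpM2l.
have S2 : (X - Y) * (P * X - W * Y) <= p * P * (a - b) * (P * X - W * Y) by rewrite ler_wpM2r.
rewrite -(ler_pM2l P0).
have -> : P * ((X - Y) * (X - Y)) = (X - Y) * (P * (X - Y)) by ring.
have -> : P * (p * ((a - b) * (P * X - W * Y))) = p * P * (a - b) * (P * X - W * Y) by ring.
exact: le_trans S2.
Qed.

Lemma pt_le (R : realType) (a b s p : R) : 0 <= a -> 0 <= b -> 1 <= p ->
  p^-1 * ((a `^ p - b `^ p) * (a `^ p - b `^ p)) <=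
  (expR (- s) * a - expR (- s) * b) *
  (expR s * a `^ (2 * p - 1) - expR s * b `^ (2 * p - 1)).
Proof.
move=> a0 b0 p1.
have p0 : 0 < p by apply: lt_le_trans p1.
have -> : (expR (- s) * a - expR (- s) * b) *
  (expR s * a `^ (2 * p - 1) - expR s * b `^ (2 * p - 1)) =
  (expR (- s) * expR s) * ((a - b) * (a `^ (2 * p - 1) - b `^ (2 * p - 1))) by ring.
rewrite expRN mulVf ?gt_eqF ?expR_gt0 // mul1r.
rewrite ler_pdivrMl //.
have [ab|ba] := leP b a; first exact: key_le.
have := @key_le _ b a p a0 (ltW ba) p1.
have -> : (b `^ p - a `^ p) * (b `^ p - a `^ p) = (a `^ p - b `^ p) * (a `^ p - b `^ p) by ring.
have -> : (b - a) * (b `^ (2 * p - 1) - a `^ (2 * p - 1)) = (a - b) * (a `^ (2 * p - 1) - b `^ (2 * p - 1)) by ring.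
by [].
Qed.

Theorem corollary1 (R : realType) (dM : measure_display) (M : measurableType dM)
  (d : M -> M -> R) (mu : {measure set M -> \bar R}) (J : R.-ker M ~> M)
  (beta R0 : R) :
  ultrametric d -> borel_of_d d -> dlocally_compact d -> dseparable d ->
  radon d mu -> full_support d mu ->
  jsymmetric mu J -> joffdiag mu J -> jradon d mu J -> jballs d mu J ->
  0 < beta -> 0 < R0 -> (R0%:E <= ddiam d)%E ->
  TJ d J beta R0 ->
  forall (x0 : M) (r rho lambda p : R) (f : M -> R),
    0 < r -> 0 < rho -> rho <= r -> 1 <= p ->
    (forall x, 0 <= f x) -> dirF d mu J f -> Linfty mu f ->
    ((p^-1)%:E * Erho d mu J rho (fun x => f x `^ p)%R (fun x => f x `^ p)%R
     <= Erho d mu J rho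
          (fun x => expR (- (lambda * \1_(dball d x0 r) x)) * f x)%R
          (fun x => expR (lambda * \1_(dball d x0 r) x) * f x `^ (2 * p - 1))%R)%E.
Proof.
move=> [d0 [dE [dsym dU]]] _ _ _ _ _ _ _ _ _ _ _ _ _ x0 r rho lambda p f r0 rho0 rr p1 f0 _ _.
have p0 : 0 < p by apply: lt_le_trans p1.
have pi0 : 0 < p^-1 by rewrite invr_gt0.
rewrite /Erho; apply: scale_le_integral => // x _.
  apply: integral_ge0 => y _; rewrite lee_fin -expr2; exact: sqr_ge0.
apply: scale_le_integral => // [y _|y Dy].
  rewrite lee_fin -expr2; exact: sqr_ge0.
have -> : \1_(dball d x0 r) y = \1_(dball d x0 r) x :> R.
  have dxy : d x y <= r by apply: le_trans Dy rr.
  rewrite /indic; congr (_ %:R).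
  have hxy : dball d x0 r x -> dball d x0 r y.
    rewrite /dball /= => h; apply: le_trans (dU x0 y x) _.
    by rewrite ge_max h dxy.
  have hyx : dball d x0 r y -> dball d x0 r x.
    rewrite /dball /= => h; apply: le_trans (dU x0 x y) _.
    by rewrite ge_max h dsym dxy.
  case: (boolP (x \in _)) => hx; case: (boolP (y \in _)) => hy //.
    by case/negP: hy; apply/mem_set; apply: hxy; exact/set_mem.
  by case/negP: hx; apply/mem_set; apply: hyx; exact/set_mem.
rewrite lee_fin; exact: pt_le.
Qed.
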